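(* Let $k_0>0$ and let $w\in C^2(\mathbb{R})$ be real-valued with $\lim_{x\to\pm\infty}w(x)=\mp k_0$, such that $U(x)=-w(x)^2-iw'(x)+k_0^2$ satisfies $\int_{\mathbb{R}}(1+|x|)|U(x)|\,dx<\infty$ and $w(x)\to\mp k_0$ fast enough that $\lim_{x\to\pm\infty}(w(x)\pm k_0)=0$ uniformly governs the asymptotics below. For real $k\neq0$ let $\phi_{1,2}^{L,R}(x;k)$ be the Jost solutions of $-\psi''+U\psi=k^2\psi$, i.e. the solutions with $\phi_1^L\sim e^{ikx},\ \phi_2^L\sim e^{-ikx}$ as $x\to-\infty$ and $\phi_1^R\sim e^{ikx},\ \phi_2^R\sim e^{-ikx}$ as $x\to+\infty$ (with corresponding asymptotics of derivatives), and let the transfer matrix $M(k)=(M_{ij}(k))$ be defined by $\phi_1^L=M_{11}\phi_1^R+M_{21}\phi_2^R$, $\phi_2^L=M_{12}\phi_1^R+M_{22}\phi_2^R$. Then for every real $k\neq0$, $$(k+k_0)\,M_{22}(k)=(k-k_0)\,\overline{M_{11}(k)},$$ and for every real $k\notin\{0,\pm k_0\}$, $$M_{11}(k)=\overline{M_{22}(k)}\,\frac{k+k_0}{k-k_0},\qquad M_{12}(k)=-\overline{M_{21}(k)}.$$ In particular $M_{22}(k_0)=0$ (a spectral singularity at $k_0$), and if $k_\star\in\mathbb{R}\setminus\{0,\pm k_0\}$ satisfies $M_{22}(k_\star)=0$, then also $M_{11}(k_\star)=0$ (the spectral singularity at $k_\star$ is self-dual).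
   Context: A real $k$ with $M_{22}(k)=0$ is a spectral singularity; it is called self-dual if additionally $M_{11}(k)=0$. Overline denotes complex conjugation. *)

(* Defs.v *)
(* classical reals. Complex numbers are modelled as pairs (Re, Im). *)
From Stdlib Require Import Reals.
Open Scope R_scope.

Definition Cx : Type := (R * R)%type.
Definition Cadd (z u : Cx) : Cx := (fst z + fst u, snd z + snd u).
Definition Copp (z : Cx) : Cx := (- fst z, - snd z).
Definition Csub (z u : Cx) : Cx := Cadd z (Copp u).
Definition Cmul (z u : Cx) : Cx :=
  (fst z * fst u - snd z * snd u, fst z * snd u + snd z * fst u).
Definition Cscale (r : R) (z : Cx) : Cx := (r * fst z, r * snd z).
Definition Cconj (z : Cx) : Cx := (fst z, - snd z).
Definition Cnorm (z : Cx) : R := sqrt (fst z * fst z + snd z * snd z).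
Definition C0 : Cx := (0, 0).
Definition Ci : Cx := (0, 1).
Definition Cexpi (t : R) : Cx := (cos t, sin t).

Definition Cderiv (f f' : R -> Cx) : Prop :=
  forall x, derivable_pt_lim (fun t => fst (f t)) x (fst (f' x)) /\
            derivable_pt_lim (fun t => snd (f t)) x (snd (f' x)).

Definition tends0_minf (g : R -> Cx) : Prop :=
  forall eps, 0 < eps -> exists A, forall x, x <= A -> Cnorm (g x) < eps.
Definition tends0_pinf (g : R -> Cx) : Prop :=
  forall eps, 0 < eps -> exists A, forall x, A <= x -> Cnorm (g x) < eps.

Definition rlim_minf (f : R -> R) (l : R) : Prop :=
  forall eps, 0 < eps -> exists A, forall x, x <= A -> Rabs (f x - l) < eps.
Definition rlim_pinf (f : R -> R) (l : R) : Prop :=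
  forall eps, 0 < eps -> exists A, forall x, A <= x -> Rabs (f x - l) < eps.

(* U(x) = - w(x)^2 - i w'(x) + k0^2, with dw the derivative of w *)
Definition Upot (w dw : R -> R) (k0 : R) (x : R) : Cx :=
  (k0 ^ 2 - w x ^ 2, - dw x).

Definition is_sol (U : R -> Cx) (k : R) (f f' : R -> Cx) : Prop :=
  Cderiv f f' /\
  exists f'', Cderiv f' f'' /\
    forall x, Cadd (Copp (f'' x)) (Cmul (U x) (f x)) = Cscale (k ^ 2) (f x).

(* Jost solution normalized at -oo: f ~ e^{i s k x}, f' ~ i s k e^{i s k x}
   (s = 1 gives phi_1, s = -1 gives phi_2). *)
Definition jost_L (U : R -> Cx) (k s : R) (f : R -> Cx) : Prop :=
  exists f', is_sol U k f f' /\
    tends0_minf (fun x => Csub (f x) (Cexpi (s * k * x))) /\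
    tends0_minf (fun x => Csub (f' x) (Cmul (0, s * k) (Cexpi (s * k * x)))).

Definition jost_R (U : R -> Cx) (k s : R) (f : R -> Cx) : Prop :=
  exists f', is_sol U k f f' /\
    tends0_pinf (fun x => Csub (f x) (Cexpi (s * k * x))) /\
    tends0_pinf (fun x => Csub (f' x) (Cmul (0, s * k) (Cexpi (s * k * x)))).

(* Main.v *)
Require Import Defs.
From Stdlib Require Import Reals Lra Psatz Ring Field FunctionalExtensionality.
Open Scope R_scope.

Definition Cone : Cx := (1, 0).

Lemma Cx_eq (z u : Cx) : fst z = fst u -> snd z = snd u -> z = u.
Proof. destruct z, u; simpl; intros; subst; reflexivity. Qed.

Ltac cx := apply Cx_eq; unfold Cadd, Cmul, Csub, Copp, Cscale, Cconj, C0, Cone, Ci, Cexpi; simpl.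

Lemma Cring : ring_theory C0 Cone Cadd Cmul Csub Copp (@eq Cx).
Proof.
  constructor; intros; cx; ring.
Qed.
Add Ring CxRing : Cring.

Lemma Cmul_integral (a b : Cx) : Cmul a b = C0 -> b <> C0 -> a = C0.
Proof.
  destruct a as [a1 a2], b as [b1 b2]; unfold Cmul, C0; simpl; intros H Hb.
  injection H; intros H2 H1.
  assert (b1*b1+b2*b2 <> 0).
  { intro E. apply Hb. assert (b1 = 0) by nra. assert (b2 = 0) by nra. subst; reflexivity. }
  assert (a1 * (b1*b1+b2*b2) = 0).
  { replace (a1 * (b1*b1+b2*b2)) with (b1*(a1*b1-a2*b2) + b2*(a1*b2+a2*b1)) by ring.
    rewrite H1, H2; ring. }
  assert (a2 * (b1*b1+b2*b2) = 0).
  { replace (a2 * (b1*b1+b2*b2)) with (b1*(a1*b2+a2*b1) - b2*(a1*b1-a2*b2)) by ring.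
    rewrite H1, H2; ring. }
  destruct (Rmult_integral _ _ H3) as [E3|E3]; [|tauto].
  destruct (Rmult_integral _ _ H4) as [E4|E4]; [|tauto]. subst; reflexivity.
Qed.

Lemma dl_mult f g x a b : derivable_pt_lim f x a -> derivable_pt_lim g x b ->
  derivable_pt_lim (fun t => f t * g t) x (a * g x + f x * b).
Proof. intros; exact (derivable_pt_lim_mult f g x a b H H0). Qed.
Lemma dl_plus f g x a b : derivable_pt_lim f x a -> derivable_pt_lim g x b ->
  derivable_pt_lim (fun t => f t + g t) x (a + b).
Proof. intros; exact (derivable_pt_lim_plus f g x a b H H0). Qed.
Lemma dl_minus f g x a b : derivable_pt_lim f x a -> derivable_pt_lim g x b ->
  derivable_pt_lim (fun t => f t - g t) x (a - b).
Proof. intros; exact (derivable_pt_lim_minus f g x a b H H0). Qed.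
Lemma dl_opp f x a : derivable_pt_lim f x a -> derivable_pt_lim (fun t => - f t) x (- a).
Proof. intros; exact (derivable_pt_lim_opp f x a H). Qed.
Lemma dl_const c x : derivable_pt_lim (fun _ => c) x 0.
Proof. exact (derivable_pt_lim_const c x). Qed.
Lemma dl_eq f x a b : derivable_pt_lim f x a -> a = b -> derivable_pt_lim f x b.
Proof. intros; subst; auto. Qed.

Lemma Cderiv_ext f g f' g' : (forall x, f x = g x) -> (forall x, f' x = g' x) ->
  Cderiv f f' -> Cderiv g g'.
Proof.
  intros E E' H. replace g with f by (apply functional_extensionality; auto).
  replace g' with f' by (apply functional_extensionality; auto). exact H.
Qed.

Lemma Cderiv_add f g f' g' : Cderiv f f' -> Cderiv g g' ->
  Cderiv (fun x => Cadd (f x) (g x)) (fun x => Cadd (f' x) (g' x)).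
Proof.
  intros Hf Hg x; destruct (Hf x), (Hg x); unfold Cadd; simpl; split; apply dl_plus; auto.
Qed.
Lemma Cderiv_mul f g f' g' : Cderiv f f' -> Cderiv g g' ->
  Cderiv (fun x => Cmul (f x) (g x)) (fun x => Cadd (Cmul (f' x) (g x)) (Cmul (f x) (g' x))).
Proof.
  intros Hf Hg x; destruct (Hf x), (Hg x); unfold Cadd, Cmul; simpl; split.
  - eapply dl_eq. apply dl_minus; apply dl_mult; eauto. cbv beta; ring.
  - eapply dl_eq. apply dl_plus; apply dl_mult; eauto. cbv beta; ring.
Qed.
Lemma Cderiv_opp f f' : Cderiv f f' -> Cderiv (fun x => Copp (f x)) (fun x => Copp (f' x)).
Proof. intros Hf x; destruct (Hf x); unfold Copp; simpl; split; apply dl_opp; auto. Qed.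
Lemma Cderiv_conj f f' : Cderiv f f' -> Cderiv (fun x => Cconj (f x)) (fun x => Cconj (f' x)).
Proof. intros Hf x; destruct (Hf x); unfold Cconj; simpl; split; auto; apply dl_opp; auto. Qed.
Lemma Cderiv_const c : Cderiv (fun _ => c) (fun _ => C0).
Proof. intros x; split; apply dl_const. Qed.
Lemma Cderiv_real r r' : (forall x, derivable_pt_lim r x (r' x)) ->
  Cderiv (fun x => (r x, 0)) (fun x => (r' x, 0)).
Proof. intros H x; simpl; split; auto; apply dl_const. Qed.
Lemma Cderiv_imag r r' : (forall x, derivable_pt_lim r x (r' x)) ->
  Cderiv (fun x => (0, r x)) (fun x => (0, r' x)).
Proof. intros H x; simpl; split; auto; apply dl_const. Qed.

Lemma Cderiv_unique f f1 f2 x : Cderiv f f1 -> Cderiv f f2 -> f1 x = f2 x.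
Proof.
  intros H1 H2; destruct (H1 x), (H2 x); apply Cx_eq; eapply uniqueness_limite; eauto.
Qed.

Lemma real_const (h : R -> R) : (forall x, derivable_pt_lim h x 0) -> forall x, h x = h 0.
Proof.
  intros H x.
  set (pr := fun x => exist (fun l => derivable_pt_abs h x l) 0 (H x) : derivable_pt h x).
  assert (Hc := null_derivative_1 h pr (fun x => eq_refl)).
  apply Hc.
Qed.

Lemma Cderiv_zero_const f : Cderiv f (fun _ => C0) -> forall x, f x = f 0.
Proof.
  intros H x; apply Cx_eq; apply (real_const (fun t => _ (f t))); intro y; apply (H y).
Qed.


Definition Wr (f f' g g' : R -> Cx) x := Csub (Cmul (f x) (g' x)) (Cmul (f' x) (g x)).

Definition sol (U : R -> Cx) (k : R) f f' f'' := Cderiv f f' /\ Cderiv f' f'' /\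
  forall x, f'' x = Csub (Cmul (U x) (f x)) (Cmul (k^2, 0) (f x)).

Lemma is_sol_sol U k f f' : is_sol U k f f' -> exists f'', sol U k f f' f''.
Proof.
  intros [H1 [f'' [H2 H3]]]; exists f''; split; [|split]; auto.
  intro x; specialize (H3 x). destruct (f'' x) as [a b], (U x) as [u v], (f x) as [c d].
  unfold Cadd, Copp, Cmul, Cscale, Csub in *; simpl in *.
  injection H3; intros E2 E1. apply Cx_eq; unfold Cadd, Copp; simpl; lra.
Qed.

Lemma wr_const U k f f' f'' g g' g'' : sol U k f f' f'' -> sol U k g g' g'' ->
  forall x, Wr f f' g g' x = Wr f f' g g' 0.
Proof.
  intros [Hf1 [Hf2 Hf3]] [Hg1 [Hg2 Hg3]].
  apply Cderiv_zero_const. unfold Wr, Csub.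
  eapply Cderiv_ext; [intro; reflexivity| |].
  2: { apply Cderiv_add; [apply Cderiv_mul; eauto| apply Cderiv_opp; apply Cderiv_mul; eauto]. }
  intro x; simpl. rewrite Hf3, Hg3. unfold Csub. ring.
Qed.

Definition Tf (w : R -> R) (f f' : R -> Cx) x := Cconj (Cadd (f' x) (Cmul (0, w x) (f x))).
Definition Tf' (w : R -> R) k0 k (f f' : R -> Cx) x :=
  Cconj (Cadd (Cmul (k0^2 - k^2 - w x ^2, 0) (f x)) (Cmul (0, w x) (f' x))).
Definition Tf'' w dw k0 k f f' x :=
  Csub (Cmul (Upot w dw k0 x) (Tf w f f' x)) (Cmul (k^2, 0) (Tf w f f' x)).

Lemma T_sol w dw d2w k0 k f f' f'' :
  (forall x, derivable_pt_lim w x (dw x)) ->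
  (forall x, derivable_pt_lim dw x (d2w x)) ->
  sol (Upot w dw k0) k f f' f'' ->
  sol (Upot w dw k0) k (Tf w f f') (Tf' w k0 k f f') (Tf'' w dw k0 k f f').
Proof.
  intros Hw Hdw [H1 [H2 H3]]. split; [|split].
  - unfold Tf. eapply Cderiv_ext; [intro; reflexivity| |].
    2: { apply Cderiv_conj. apply Cderiv_add; [exact H2|]. apply Cderiv_mul; [|exact H1].
         apply Cderiv_imag. exact Hw. }
    intro x; simpl. rewrite H3. unfold Tf', Upot, Csub. cx; ring.
  - unfold Tf'. eapply Cderiv_ext; [intro; reflexivity| |].
    2: { apply Cderiv_conj. apply Cderiv_add; (apply Cderiv_mul; [|eauto]).
         - apply (Cderiv_real _ (fun x => - (2 * w x * dw x))). intro x.
           replace (fun x => k0^2 - k^2 - w x ^ 2) with (fun x => k0^2 - k^2 - w x * w x)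
             by (apply functional_extensionality; intro; ring).
           eapply dl_eq. apply dl_minus. apply dl_const. apply dl_mult; apply Hw. ring.
         - apply Cderiv_imag. exact Hw. }
    intro x; simpl. rewrite H3. unfold Tf'', Tf, Upot, Csub. cx; ring.
  - intro x; reflexivity.
Qed.


Definition ev (s:bool) (P:R->Prop) := exists A, forall x, (if s then A <= x else x <= A) -> P x.
Definition n1 (z : Cx) := Rabs (fst z) + Rabs (snd z).
Definition small s (g : R -> Cx) := forall eps, 0 < eps -> ev s (fun x => n1 (g x) < eps).
Definition bnd s (g : R -> Cx) := exists C, ev s (fun x => n1 (g x) <= C).

Lemma ev_and s (P Q : R -> Prop) : ev s P -> ev s Q -> ev s (fun x => P x /\ Q x).
Proof.
  intros [A HA] [B HB]; destruct s.
  - exists (Rmax A B); intros x Hx; split; [apply HA|apply HB];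
      [apply Rle_trans with (Rmax A B); auto; apply Rmax_l
      |apply Rle_trans with (Rmax A B); auto; apply Rmax_r].
  - exists (Rmin A B); intros x Hx; split; [apply HA|apply HB];
      [apply Rle_trans with (Rmin A B); auto; apply Rmin_l
      |apply Rle_trans with (Rmin A B); auto; apply Rmin_r].
Qed.
Lemma ev_mono s (P Q : R -> Prop) : (forall x, P x -> Q x) -> ev s P -> ev s Q.
Proof. intros H [A HA]; exists A; auto. Qed.
Lemma ev_ex s P : ev s P -> exists x, P x.
Proof. intros [A HA]; exists A; apply HA; destruct s; lra. Qed.

Lemma n1_nonneg z : 0 <= n1 z.
Proof. unfold n1; pose proof (Rabs_pos (fst z)); pose proof (Rabs_pos (snd z)); lra. Qed.
Lemma n1_add a b : n1 (Cadd a b) <= n1 a + n1 b.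
Proof.
  unfold n1, Cadd; simpl.
  pose proof (Rabs_triang (fst a) (fst b)); pose proof (Rabs_triang (snd a) (snd b)); lra.
Qed.
Lemma n1_mul a b : n1 (Cmul a b) <= n1 a * n1 b.
Proof.
  unfold n1, Cmul; simpl. destruct a as [x y], b as [u v]; simpl.
  unfold Rminus.
  pose proof (Rabs_triang (x*u) (-(y*v))); pose proof (Rabs_triang (x*v) (y*u)).
  rewrite Rabs_Ropp in H. rewrite !Rabs_mult in *.
  pose proof (Rabs_pos x); pose proof (Rabs_pos y); pose proof (Rabs_pos u); pose proof (Rabs_pos v).
  nra.
Qed.
Lemma n1_conj a : n1 (Cconj a) = n1 a.
Proof. unfold n1, Cconj; simpl; rewrite Rabs_Ropp; reflexivity. Qed.
Lemma n1_opp a : n1 (Copp a) = n1 a.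
Proof. unfold n1, Copp; simpl; rewrite !Rabs_Ropp; reflexivity. Qed.

Lemma small_ext s g h : (forall x, g x = h x) -> small s h -> small s g.
Proof. intros E H eps He; eapply ev_mono; [|exact (H eps He)]; intros x Hx; simpl; rewrite E; exact Hx. Qed.
Lemma bnd_ext s g h : (forall x, g x = h x) -> bnd s h -> bnd s g.
Proof. intros E [C H]; exists C; eapply ev_mono; [|exact H]; intros x Hx; rewrite E; exact Hx. Qed.

Lemma small_add s g h : small s g -> small s h -> small s (fun x => Cadd (g x) (h x)).
Proof.
  intros Hg Hh eps He.
  eapply ev_mono; [|apply ev_and; [apply (Hg (eps/2)) | apply (Hh (eps/2))]; lra].
  intros x [H1 H2]; pose proof (n1_add (g x) (h x)); lra.
Qed.
Lemma small_opp s g : small s g -> small s (fun x => Copp (g x)).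
Proof. intros Hg eps He; eapply ev_mono; [|apply (Hg eps He)]; intros x H; rewrite n1_opp; auto. Qed.
Lemma small_conj s g : small s g -> small s (fun x => Cconj (g x)).
Proof. intros Hg eps He; eapply ev_mono; [|apply (Hg eps He)]; intros x H; rewrite n1_conj; auto. Qed.
Lemma small_mul s g h : small s g -> bnd s h -> small s (fun x => Cmul (g x) (h x)).
Proof.
  intros Hg [C Hh] eps He.
  set (C' := Rabs C + 1).
  assert (0 < C') by (unfold C'; pose proof (Rabs_pos C); lra).
  eapply ev_mono; [|apply ev_and; [apply (Hg (eps/C')) | exact Hh]].
  2: apply Rdiv_lt_0_compat; lra.
  intros x [H1 H2]. pose proof (n1_mul (g x) (h x)). pose proof (n1_nonneg (g x)).
  pose proof (n1_nonneg (h x)).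
  assert (C <= C') by (unfold C'; pose proof (Rle_abs C); lra).
  assert (n1 (g x) * C' < eps).
  { apply Rmult_lt_reg_r with (/C'). apply Rinv_0_lt_compat; lra.
    replace (n1 (g x) * C' * / C') with (n1 (g x)) by (field; lra). exact H1. }
  nra.
Qed.
Lemma small_mul_l s g h : bnd s g -> small s h -> small s (fun x => Cmul (g x) (h x)).
Proof.
  intros Hg Hh. eapply small_ext; [|apply (small_mul s h g Hh Hg)]. intro x; simpl. ring.
Qed.

Lemma bnd_add s g h : bnd s g -> bnd s h -> bnd s (fun x => Cadd (g x) (h x)).
Proof.
  intros [C1 H1] [C2 H2]; exists (C1 + C2); eapply ev_mono; [|apply ev_and; [exact H1|exact H2]].
  intros x [A B]; pose proof (n1_add (g x) (h x)); lra.
Qed.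
Lemma bnd_mul s g h : bnd s g -> bnd s h -> bnd s (fun x => Cmul (g x) (h x)).
Proof.
  intros [C1 H1] [C2 H2]; exists (C1 * C2); eapply ev_mono; [|apply ev_and; [exact H1|exact H2]].
  intros x [A B]; pose proof (n1_mul (g x) (h x)).
  pose proof (n1_nonneg (g x)); pose proof (n1_nonneg (h x)). nra.
Qed.
Lemma bnd_const s c : bnd s (fun _ => c).
Proof. exists (n1 c); exists 0; intros; lra. Qed.
Lemma bnd_conj s g : bnd s g -> bnd s (fun x => Cconj (g x)).
Proof. intros [C H]; exists C; eapply ev_mono; [|exact H]; intros x Hx; rewrite n1_conj; auto. Qed.
Lemma small_bnd s g : small s g -> bnd s g.
Proof. intros H; exists 1; eapply ev_mono; [|apply (H 1); lra]; intros; lra. Qed.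
Lemma bnd_of_small s f a : small s (fun x => Csub (f x) (a x)) -> bnd s a -> bnd s f.
Proof.
  intros H1 H2. eapply bnd_ext; [|apply (bnd_add s _ _ (small_bnd _ _ H1) H2)].
  intro x; simpl; unfold Csub; ring.
Qed.
Lemma bnd_expi s r : bnd s (fun x => Cexpi (r x)).
Proof.
  exists 2; exists 0; intros x _. unfold n1, Cexpi; simpl.
  pose proof (COS_bound (r x)); pose proof (SIN_bound (r x)).
  unfold Rabs; repeat destruct Rcase_abs; lra.
Qed.

Lemma small_const s c : small s (fun _ => c) -> c = C0.
Proof.
  intros H. assert (forall eps, 0 < eps -> n1 c < eps).
  { intros eps He; destruct (ev_ex _ _ (H eps He)); auto. }
  assert (n1 c = 0).
  { pose proof (n1_nonneg c). destruct (Req_dec (n1 c) 0); auto.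
    specialize (H0 (n1 c) ltac:(lra)); lra. }
  destruct c as [a b]; unfold n1 in H1; simpl in H1.
  pose proof (Rabs_pos a); pose proof (Rabs_pos b).
  assert (Rabs a = 0) by lra; assert (Rabs b = 0) by lra.
  unfold C0; f_equal; [destruct (Req_dec a 0) as [|n]; [auto|apply Rabs_no_R0 in n; lra] | destruct (Req_dec b 0) as [|n]; [auto|apply Rabs_no_R0 in n; lra]].
Qed.

Lemma abs_le_cnorm a b : Rabs a <= Cnorm (a, b).
Proof.
  unfold Cnorm; simpl. rewrite <- sqrt_Rsqr_abs. apply sqrt_le_1_alt. unfold Rsqr.
  nra.
Qed.
Lemma n1_le_cnorm z : n1 z <= 2 * Cnorm z.
Proof.
  destruct z as [a b]; unfold n1; simpl.
  pose proof (abs_le_cnorm a b).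
  assert (Rabs b <= Cnorm (a,b)).
  { unfold Cnorm; simpl. rewrite <- sqrt_Rsqr_abs. apply sqrt_le_1_alt. unfold Rsqr. nra. }
  lra.
Qed.

Lemma tends0_minf_small g : tends0_minf g -> small false g.
Proof.
  intros H eps He. destruct (H (eps/2)) as [A HA]; [lra|].
  exists A; intros x Hx. pose proof (n1_le_cnorm (g x)). specialize (HA x Hx). lra.
Qed.
Lemma tends0_pinf_small g : tends0_pinf g -> small true g.
Proof.
  intros H eps He. destruct (H (eps/2)) as [A HA]; [lra|].
  exists A; intros x Hx. pose proof (n1_le_cnorm (g x)). specialize (HA x Hx). lra.
Qed.
Lemma rlim_minf_small w l : rlim_minf w l -> small false (fun x => (w x - l, 0)).
Proof.
  intros H eps He. destruct (H eps He) as [A HA].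
  exists A; intros x Hx; unfold n1; simpl. rewrite Rabs_R0, Rplus_0_r. auto.
Qed.
Lemma rlim_pinf_small w l : rlim_pinf w l -> small true (fun x => (w x - l, 0)).
Proof.
  intros H eps He. destruct (H eps He) as [A HA].
  exists A; intros x Hx; unfold n1; simpl. rewrite Rabs_R0, Rplus_0_r. auto.
Qed.


Definition E k (al : Cx) (sg : R) x := Cmul al (Cexpi (sg*k*x)).
Definition E' k (al : Cx) (sg : R) x := Cmul al (Cmul (0, sg*k) (Cexpi (sg*k*x))).

Lemma wr_E k al be sg ta x :
  Wr (E k al sg) (E' k al sg) (E k be ta) (E' k be ta) x =
  Cmul (Cmul al be) (Cmul (0, k*(ta-sg)) (Cexpi ((sg+ta)*k*x))).
Proof.
  unfold Wr, E, E', Cexpi.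
  replace ((sg+ta)*k*x) with (sg*k*x + ta*k*x) by ring.
  rewrite cos_plus, sin_plus. cx; ring.
Qed.

Lemma bnd_E s k al sg : bnd s (E k al sg).
Proof. unfold E. apply bnd_mul; [apply bnd_const|apply bnd_expi]. Qed.
Lemma bnd_E' s k al sg : bnd s (E' k al sg).
Proof. unfold E'. apply bnd_mul; [apply bnd_const|apply bnd_mul; [apply bnd_const|apply bnd_expi]]. Qed.

Lemma wr_lim s f f' g g' a a' b b' :
  small s (fun x => Csub (f x) (a x)) -> small s (fun x => Csub (f' x) (a' x)) ->
  small s (fun x => Csub (g x) (b x)) -> small s (fun x => Csub (g' x) (b' x)) ->
  bnd s a -> bnd s a' -> bnd s b -> bnd s b' ->
  small s (fun x => Csub (Wr f f' g g' x) (Wr a a' b b' x)).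
Proof.
  intros H1 H2 H3 H4 Ba Ba' Bb Bb'.
  assert (Bg := bnd_of_small _ _ _ H3 Bb).
  assert (Bg' := bnd_of_small _ _ _ H4 Bb').
  eapply small_ext.
  2:{ apply small_add; [apply small_add|apply small_opp; apply small_add].
      - apply (small_mul _ _ _ H1 Bg').
      - apply (small_mul_l _ _ _ Ba H4).
      - apply (small_mul _ _ _ H2 Bg).
      - apply (small_mul_l _ _ _ Ba' H3). }
  intro x; unfold Wr; simpl; unfold Csub; ring.
Qed.

Lemma const_lim s (W Wa : R -> Cx) c :
  (forall x, W x = W 0) -> (forall x, Wa x = c) ->
  small s (fun x => Csub (W x) (Wa x)) -> W 0 = c.
Proof.
  intros HW Ha Hs.
  assert (Csub (W 0) c = C0).
  { apply (small_const s). eapply small_ext; [|exact Hs]. intro x; simpl; rewrite (HW x), (Ha x); reflexivity. }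
  transitivity (Cadd (Csub (W 0) c) c); [unfold Csub; ring|]. rewrite H; unfold C0; cx; ring.
Qed.

Lemma T_lim s w k0 k winf sg f f' :
  (sg = 1 \/ sg = -1) -> winf ^ 2 = k0 ^ 2 ->
  small s (fun x => (w x - winf, 0)) ->
  small s (fun x => Csub (f x) (Cexpi (sg*k*x))) ->
  small s (fun x => Csub (f' x) (Cmul (0, sg*k) (Cexpi (sg*k*x)))) ->
  small s (fun x => Csub (Tf w f f' x) (E k (0, -(sg*k+winf)) (-sg) x)) /\
  small s (fun x => Csub (Tf' w k0 k f f' x) (E' k (0, -(sg*k+winf)) (-sg) x)).
Proof.
  intros Hsg Hwi Hw Hf Hf'.
  assert (Bw : bnd s (fun x => (w x, 0))).
  { eapply bnd_of_small; [|apply (bnd_const s (winf, 0))]. eapply small_ext; [|exact Hw].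
    intro x; cx; ring. }
  assert (Bwi : bnd s (fun x => (0, w x))).
  { eapply bnd_ext; [|apply (bnd_mul _ _ _ (bnd_const s Ci) Bw)]. intro x; cx; ring. }
  split.
  - eapply small_ext.
    2:{ apply small_conj. apply small_add; [exact Hf'|apply small_add].
        - apply (small_mul_l _ _ _ Bwi Hf).
        - apply small_mul; [apply (small_mul_l _ _ _ (bnd_const s Ci) Hw)|apply (bnd_expi s (fun x => sg*k*x))]. }
    intro x. unfold Tf, E, Cexpi. replace (- sg * k * x) with (- (sg*k*x)) by ring.
    rewrite cos_neg, sin_neg. destruct Hsg; subst; cx; ring.
  - assert (Bq : bnd s (fun x => (k0^2 - k^2 - w x ^2, 0))).
    { eapply bnd_ext; [|apply (bnd_add _ _ _ (bnd_const s (k0^2-k^2, 0)) (bnd_mul _ _ _ (bnd_const s (-1,0)) (bnd_mul _ _ _ Bw Bw)))].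
      intro x; cx; ring. }
    assert (Bd : bnd s (fun x => Cadd (w x - winf, 0) (2*winf, 0))).
    { apply bnd_add; [apply small_bnd; exact Hw|apply bnd_const]. }
    eapply small_ext.
    2:{ apply small_conj. apply small_add; [|apply small_add; [|apply small_add]].
        - apply (small_mul_l _ _ _ Bq Hf).
        - apply small_mul; [|apply (bnd_expi s (fun x => sg*k*x))].
          apply small_mul; [|exact Bd]. apply (small_mul_l _ _ _ (bnd_const s (-1,0)) Hw).
        - apply (small_mul_l _ _ _ Bwi Hf').
        - apply small_mul; [apply (small_mul_l _ _ _ (bnd_const s Ci) Hw)|].
          apply bnd_mul; [apply (bnd_const s (0, sg*k))|apply (bnd_expi s (fun x => sg*k*x))]. }
    intro x. unfold Tf', E', Cexpi. rewrite <- Hwi. replace (- sg * k * x) with (- (sg*k*x)) by ring.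
    rewrite cos_neg, sin_neg. destruct Hsg; subst; cx; ring.
Qed.


Lemma jostE s k sg f : small s (fun x => Csub (f x) (Cexpi (sg*k*x))) ->
  small s (fun x => Csub (f x) (E k Cone sg x)).
Proof. apply small_ext; intro x; unfold E, Csub; ring. Qed.
Lemma jostE' s k sg f : small s (fun x => Csub (f x) (Cmul (0, sg*k) (Cexpi (sg*k*x)))) ->
  small s (fun x => Csub (f x) (E' k Cone sg x)).
Proof. apply small_ext; intro x; unfold E', Csub; ring. Qed.

Lemma wr_val s U k f f' f'' g g' g'' al sg be ta c :
  sol U k f f' f'' -> sol U k g g' g'' ->
  small s (fun x => Csub (f x) (E k al sg x)) -> small s (fun x => Csub (f' x) (E' k al sg x)) ->
  small s (fun x => Csub (g x) (E k be ta x)) -> small s (fun x => Csub (g' x) (E' k be ta x)) ->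
  (forall x, Cmul (Cmul al be) (Cmul (0, k*(ta-sg)) (Cexpi ((sg+ta)*k*x))) = c) ->
  Wr f f' g g' 0 = c.
Proof.
  intros Sf Sg H1 H2 H3 H4 Hc.
  apply (const_lim s _ (fun x => Wr (E k al sg) (E' k al sg) (E k be ta) (E' k be ta) x)).
  - eapply wr_const; eauto.
  - intro x; rewrite wr_E; auto.
  - apply wr_lim; auto; first [apply bnd_E | apply bnd_E'].
Qed.

Lemma coef_opp k al be sg ta c : sg + ta = 0 -> Cmul (Cmul al be) (0, k*(ta-sg)) = c ->
  forall x, Cmul (Cmul al be) (Cmul (0, k*(ta-sg)) (Cexpi ((sg+ta)*k*x))) = c.
Proof.
  intros H Hc x. replace ((sg+ta)*k*x) with 0 by (rewrite H; ring).
  rewrite <- Hc. unfold Cexpi; rewrite cos_0, sin_0. cx; ring.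
Qed.
Lemma coef_same k al be sg ta : ta - sg = 0 ->
  forall x, Cmul (Cmul al be) (Cmul (0, k*(ta-sg)) (Cexpi ((sg+ta)*k*x))) = C0.
Proof. intros H x. rewrite H. cx; ring. Qed.

Lemma cramer (p1 q1 p2 q2 f g D A B : Cx) :
  Csub (Cmul p1 q2) (Cmul q1 p2) = D -> Csub (Cmul f q2) (Cmul g p2) = A ->
  Csub (Cmul p1 g) (Cmul q1 f) = B ->
  Cmul f D = Cadd (Cmul A p1) (Cmul B p2) /\ Cmul g D = Cadd (Cmul A q1) (Cmul B q2).
Proof. intros; subst; unfold Csub; split; ring. Qed.

Lemma cancelD (a b D : Cx) : D <> C0 -> Cmul a D = Cmul b D -> a = b.
Proof.
  intros HD H. assert (Csub a b = C0).
  { apply (Cmul_integral _ D); auto. unfold Csub. transitivity (Cadd (Cmul a D) (Copp (Cmul b D))); [ring|].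
    rewrite H. cx; ring. }
  transitivity (Cadd (Csub a b) b); [unfold Csub; ring|]. rewrite H0; cx; ring.
Qed.

Lemma deriv_comb f f' g g' h h' a b :
  Cderiv f f' -> Cderiv g g' -> Cderiv h h' ->
  (forall x, f x = Cadd (Cmul a (g x)) (Cmul b (h x))) ->
  forall x, f' x = Cadd (Cmul a (g' x)) (Cmul b (h' x)).
Proof.
  intros Hf Hg Hh E x. apply (Cderiv_unique f f' (fun y => Cadd (Cmul a (g' y)) (Cmul b (h' y))) x Hf).
  eapply Cderiv_ext; [intro y; symmetry; apply E| |].
  2:{ apply Cderiv_add; apply Cderiv_mul; eauto; apply Cderiv_const. }
  intro y; simpl; unfold C0; cx; ring.
Qed.

Theorem mainTheorem5
  (k0 : R) (w dw d2w : R -> R)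
  (Hk0 : 0 < k0)
  (* w is C^2: dw = w', d2w = w'', and w'' continuous *)
  (Hdw : forall x, derivable_pt_lim w x (dw x))
  (Hd2w : forall x, derivable_pt_lim dw x (d2w x))
  (Hcont : continuity d2w)
  (* lim_{x -> -oo} w = k0, lim_{x -> +oo} w = -k0 *)
  (Hlimm : rlim_minf w k0)
  (Hlimp : rlim_pinf w (- k0))
  (* int_R (1+|x|) |U(x)| dx < oo *)
  (Hint : exists B : R, forall (a b : R)
      (pr : Riemann_integrable
              (fun x => (1 + Rabs x) * Cnorm (Upot w dw k0 x)) a b),
      RiemannInt pr <= B)
  (k : R) (Hk : k <> 0)
  (phi1L phi2L phi1R phi2R : R -> Cx)
  (H1L : jost_L (Upot w dw k0) k 1 phi1L)
  (H2L : jost_L (Upot w dw k0) k (-1) phi2L)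
  (H1R : jost_R (Upot w dw k0) k 1 phi1R)
  (H2R : jost_R (Upot w dw k0) k (-1) phi2R)
  (M11 M12 M21 M22 : Cx)
  (HM1 : forall x, phi1L x = Cadd (Cmul M11 (phi1R x)) (Cmul M21 (phi2R x)))
  (HM2 : forall x, phi2L x = Cadd (Cmul M12 (phi1R x)) (Cmul M22 (phi2R x))) :
  Cscale (k + k0) M22 = Cscale (k - k0) (Cconj M11) /\
  (k <> k0 -> k <> - k0 ->
     M11 = Cscale ((k + k0) / (k - k0)) (Cconj M22) /\ M12 = Copp (Cconj M21)) /\
  (k = k0 -> M22 = C0) /\
  (k <> k0 -> k <> - k0 -> M22 = C0 -> M11 = C0).
Proof.
  set (U := Upot w dw k0) in *.
  destruct H1L as [q1L [S1L [A1L B1L]]]; destruct (is_sol_sol _ _ _ _ S1L) as [r1L So1L].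
  destruct H2L as [q2L [S2L [A2L B2L]]]; destruct (is_sol_sol _ _ _ _ S2L) as [r2L So2L].
  destruct H1R as [q1R [S1R [A1R B1R]]]; destruct (is_sol_sol _ _ _ _ S1R) as [r1R So1R].
  destruct H2R as [q2R [S2R [A2R B2R]]]; destruct (is_sol_sol _ _ _ _ S2R) as [r2R So2R].
  apply tends0_minf_small in A1L, B1L, A2L, B2L.
  apply tends0_pinf_small in A1R, B1R, A2R, B2R.
  assert (Wm := rlim_minf_small _ _ Hlimm).
  assert (Wp := rlim_pinf_small _ _ Hlimp).
  assert (T1L := T_lim _ w k0 k k0 1 phi1L q1L (or_introl eq_refl) eq_refl Wm A1L B1L).
  assert (T1R := T_lim _ w k0 k (-k0) 1 phi1R q1R (or_introl eq_refl) ltac:(ring) Wp A1R B1R).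
  assert (T2R := T_lim _ w k0 k (-k0) (-1) phi2R q2R (or_intror eq_refl) ltac:(ring) Wp A2R B2R).
  destruct T1L as [T1La T1Lb]; destruct T1R as [T1Ra T1Rb]; destruct T2R as [T2Ra T2Rb].
  assert (ST1L := T_sol _ _ _ k0 k _ _ _ Hdw Hd2w So1L).
  assert (ST1R := T_sol _ _ _ k0 k _ _ _ Hdw Hd2w So1R).
  assert (ST2R := T_sol _ _ _ k0 k _ _ _ Hdw Hd2w So2R).
  apply jostE in A1L, A2L, A1R, A2R. apply jostE' in B1L, B2L, B1R, B2R.
  set (D := (0, -2*k) : Cx).
  set (b1 := (0, - (1 * k + k0)) : Cx) in *.
  set (b2 := (0, - (1 * k + - k0)) : Cx) in *.
  set (b3 := (0, - (-1 * k + - k0)) : Cx) in *.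
  assert (L1 : Wr phi1L q1L phi2L q2L 0 = D).
  { eapply wr_val; eauto. apply coef_opp; [ring|]. unfold D; cx; ring. }
  assert (L2 : Wr (Tf w phi1L q1L) (Tf' w k0 k phi1L q1L) phi2L q2L 0 = C0).
  { eapply wr_val; eauto. apply coef_same; ring. }
  assert (L3 : Wr phi1L q1L (Tf w phi1L q1L) (Tf' w k0 k phi1L q1L) 0 = Cmul b1 D).
  { eapply wr_val; eauto. apply coef_opp; [ring|]. unfold D, b1; cx; ring. }
  assert (R1 : Wr phi1R q1R phi2R q2R 0 = D).
  { eapply wr_val; eauto. apply coef_opp; [ring|]. unfold D; cx; ring. }
  assert (R2 : Wr (Tf w phi1R q1R) (Tf' w k0 k phi1R q1R) phi2R q2R 0 = C0).
  { eapply wr_val; eauto. apply coef_same; ring. }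
  assert (R3 : Wr phi1R q1R (Tf w phi1R q1R) (Tf' w k0 k phi1R q1R) 0 = Cmul b2 D).
  { eapply wr_val; eauto. apply coef_opp; [ring|]. unfold D, b2; cx; ring. }
  assert (R4 : Wr (Tf w phi2R q2R) (Tf' w k0 k phi2R q2R) phi2R q2R 0 = Cmul b3 D).
  { eapply wr_val; eauto. apply coef_opp; [ring|]. unfold D, b3; cx; ring. }
  assert (R5 : Wr phi1R q1R (Tf w phi2R q2R) (Tf' w k0 k phi2R q2R) 0 = C0).
  { eapply wr_val; eauto. apply coef_same; ring. }
  assert (HD : D <> C0).
  { unfold D, C0; intro H; injection H; intro; apply Hk; lra. }
  unfold Wr in L1, L2, L3, R1, R2, R3, R4, R5.
  destruct (cramer _ _ _ _ _ _ _ _ _ L1 L2 L3) as [C1 C2].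
  destruct (cramer _ _ _ _ _ _ _ _ _ R1 R2 R3) as [C3 C4].
  destruct (cramer _ _ _ _ _ _ _ _ _ R1 R4 R5) as [C5 C6].
  assert (E1 : Tf w phi1L q1L 0 = Cmul b1 (phi2L 0)).
  { apply (cancelD _ _ D HD). rewrite C1; ring. }
  assert (E2 : Tf' w k0 k phi1L q1L 0 = Cmul b1 (q2L 0)).
  { apply (cancelD _ _ D HD). rewrite C2; ring. }
  assert (E3 : Tf w phi1R q1R 0 = Cmul b2 (phi2R 0)).
  { apply (cancelD _ _ D HD). rewrite C3; ring. }
  assert (E4 : Tf' w k0 k phi1R q1R 0 = Cmul b2 (q2R 0)).
  { apply (cancelD _ _ D HD). rewrite C4; ring. }
  assert (E5 : Tf w phi2R q2R 0 = Cmul b3 (phi1R 0)).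
  { apply (cancelD _ _ D HD). rewrite C5; ring. }
  assert (E6 : Tf' w k0 k phi2R q2R 0 = Cmul b3 (q1R 0)).
  { apply (cancelD _ _ D HD). rewrite C6; ring. }
  destruct So1L as [Dp1L _]; destruct So2L as [Dp2L _];
  destruct So1R as [Dp1R _]; destruct So2R as [Dp2R _].
  assert (d1 := deriv_comb _ _ _ _ _ _ _ _ Dp1L Dp1R Dp2R HM1 0).
  assert (d2 := deriv_comb _ _ _ _ _ _ _ _ Dp2L Dp1R Dp2R HM2 0).
  assert (A1 : Tf w phi1L q1L 0 = Cadd (Cmul (Cconj M11) (Tf w phi1R q1R 0)) (Cmul (Cconj M21) (Tf w phi2R q2R 0))).
  { unfold Tf. rewrite (HM1 0), d1. cx; ring. }
  assert (A2 : Tf' w k0 k phi1L q1L 0 = Cadd (Cmul (Cconj M11) (Tf' w k0 k phi1R q1R 0)) (Cmul (Cconj M21) (Tf' w k0 k phi2R q2R 0))).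
  { unfold Tf'. rewrite (HM1 0), d1. cx; ring. }
  set (a := Csub (Cmul b1 M12) (Cmul (Cconj M21) b3)).
  set (b := Csub (Cmul b1 M22) (Cmul (Cconj M11) b2)).
  assert (F1 : Cadd (Cmul a (phi1R 0)) (Cmul b (phi2R 0)) = C0).
  { transitivity (Csub (Cmul b1 (phi2L 0)) (Tf w phi1L q1L 0)).
    - rewrite A1, E3, E5, (HM2 0). unfold a, b, Csub; ring.
    - rewrite E1. unfold Csub; cx; ring. }
  assert (F2 : Cadd (Cmul a (q1R 0)) (Cmul b (q2R 0)) = C0).
  { transitivity (Csub (Cmul b1 (q2L 0)) (Tf' w k0 k phi1L q1L 0)).
    - rewrite A2, E4, E6, d2. unfold a, b, Csub; ring.
    - rewrite E2. unfold Csub; cx; ring. }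
  assert (Ha : a = C0).
  { apply (Cmul_integral _ D); auto. rewrite <- R1.
    transitivity (Csub (Cmul (q2R 0) (Cadd (Cmul a (phi1R 0)) (Cmul b (phi2R 0))))
                       (Cmul (phi2R 0) (Cadd (Cmul a (q1R 0)) (Cmul b (q2R 0))))); [unfold Csub; ring|].
    rewrite F1, F2. cx; ring. }
  assert (Hb : b = C0).
  { apply (Cmul_integral _ D); auto. rewrite <- R1.
    transitivity (Csub (Cmul (phi1R 0) (Cadd (Cmul a (q1R 0)) (Cmul b (q2R 0))))
                       (Cmul (q1R 0) (Cadd (Cmul a (phi1R 0)) (Cmul b (phi2R 0))))); [unfold Csub; ring|].
    rewrite F1, F2. cx; ring. }
  unfold a, b in Ha, Hb. unfold b1, b2, b3 in *.
  destruct M11 as [u v], M12 as [m1 m2], M21 as [p q], M22 as [x y].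
  unfold Csub, Cadd, Cmul, Copp, Cconj, C0 in Ha, Hb; simpl in Ha, Hb.
  injection Ha; intros Ha2 Ha1. injection Hb; intros Hb2 Hb1.
  unfold Cscale, Cconj, Copp, C0; simpl.
  split; [|split; [|split]].
  - f_equal; nra.
  - intros Hk1 Hk2. assert (k - k0 <> 0) by lra. assert (k + k0 <> 0) by lra. split.
    + f_equal; field_simplify; auto; [apply (Rmult_eq_reg_r (k - k0)); auto|apply (Rmult_eq_reg_r (k - k0)); auto]; field_simplify; auto; nra.
    + f_equal; [apply (Rmult_eq_reg_r (k + k0)); auto; nra|apply (Rmult_eq_reg_r (k + k0)); auto; nra].
  - intro; subst k. f_equal; nra.
  - intros Hk1 Hk2 HM. injection HM; intros; subst x y. assert (k - k0 <> 0) by lra.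
    f_equal; [apply (Rmult_eq_reg_r (k - k0)); auto; nra|apply (Rmult_eq_reg_r (k - k0)); auto; nra].
Qed.
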